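(* Let $K$ be an oriented virtual knot diagram with a positive classical crossing $l$, and let $K'$ be the diagram obtained from $K$ by switching $l$ to a negative crossing. Then $\gamma(K)+\gamma(K')\equiv 0 \pmod 2$ (coefficientwise).
   Context: For an oriented virtual knot diagram $K$ and a classical crossing $c$ with sign $sgn(c)\in\{\pm1\}$, let $K_c$ be the two-component oriented virtual link diagram obtained by smoothing $c$ in the orientation-respecting way. Let $L(K_c)$ be the sum of the signs of all classical crossings of $K_c$ at which the two strands belong to different components, and $\bar L(K_c)=L(K_c)\bmod 2\in\{0,1\}$. Define $\gamma(K)=\sum_{c} t^{\bar L(K_c)}\,sgn(c)$, summing over all classical crossings, an element of the free $\mathbb{Z}$-module on $\{1,t\}$. *)

(* Defs.v *)
From mathcomp Require Import all_boot all_order all_algebra.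
Set Implicit Arguments. Unset Strict Implicit. Unset Printing Implicit Defensive.
Import Order.TTheory GRing.Theory Num.Theory.
Local Open Scope ring_scope.

(* An oriented virtual knot diagram with n classical crossings is encoded by
   its Gauss diagram (virtual crossings are not recorded): the cyclic word
   read along the knot, where each letter (c, b) records passing through
   crossing c : 'I_n as over-strand (b = true) or under-strand (b = false),
   together with the local sign of each classical crossing. *)
Record gauss_diagram (n : nat) := GaussDiagram {
  gd_word : seq ('I_n * bool);
  gd_sign : 'I_n -> int
}.

Definition wf_gauss n (K : gauss_diagram n) : Prop :=
  (forall c : 'I_n, count_mem (c, true) (gd_word K) = 1%N /\
                    count_mem (c, false) (gd_word K) = 1%N) /\
  (forall c : 'I_n, gd_sign K c = 1 \/ gd_sign K c = -1).

Definition gpos n (K : gauss_diagram n) (c : 'I_n) (b : bool) : nat :=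
  index (c, b) (gd_word K).

(* Smoothing c splits the circle into the arc strictly between the two
   passages through c and the complementary arc: these are the two
   components of K_c.  Crossing d (d != c) is a crossing between different
   components iff exactly one of its passages lies strictly inside that arc. *)
Definition inside_arc n (K : gauss_diagram n) (c : 'I_n) (p : nat) : bool :=
  (minn (gpos K c true) (gpos K c false) < p <
     maxn (gpos K c true) (gpos K c false))%N.

Definition mixed_crossing n (K : gauss_diagram n) (c d : 'I_n) : bool :=
  (d != c) && (inside_arc K c (gpos K d true) != inside_arc K c (gpos K d false)).

Definition Lsm n (K : gauss_diagram n) (c : 'I_n) : int :=
  \sum_(d : 'I_n | mixed_crossing K c d) gd_sign K d.

Definition Lbar n (K : gauss_diagram n) (c : 'I_n) : nat := odd `|Lsm K c|%N.

Definition gamma n (K : gauss_diagram n) : {poly int} :=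
  \sum_(c : 'I_n) (gd_sign K c)%:P * 'X^(Lbar K c).

Definition switch n (K : gauss_diagram n) (l : 'I_n) : gauss_diagram n :=
  GaussDiagram
    [seq (if p.1 == l then (p.1, ~~ p.2) else p) | p <- gd_word K]
    (fun c => if c == l then - gd_sign K c else gd_sign K c).

(* Main.v *)
Require Import Defs.
From mathcomp Require Import all_boot all_order all_algebra.
Import Order.TTheory GRing.Theory Num.Theory.
Local Open Scope ring_scope.

Lemma odd_abs2 (x : int) : odd `|x|%N = ~~ (2 %| x)%Z.
Proof. by rewrite dvdzE dvdn2 negbK. Qed.

Lemma gpos_switch n (K : gauss_diagram n) l c b :
  gpos (switch K l) c b = gpos K c (if c == l then ~~ b else b).
Proof.
rewrite /gpos /switch /=.
set f := fun p : 'I_n * bool => if p.1 == l then (p.1, ~~ p.2) else p.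
have finv : involutive f.
  case=> a b'; rewrite /f /=; case: (eqVneq a l) => [->|h] /=.
    by rewrite eqxx negbK.
  by rewrite (negbTE h).
have -> : (c, b) = f (c, if c == l then ~~ b else b).
  by rewrite /f /=; case: eqP => //= _; rewrite negbK.
by rewrite index_map //; apply: inv_inj.
Qed.

Lemma inside_switch n (K : gauss_diagram n) l c p :
  inside_arc (switch K l) c p = inside_arc K c p.
Proof.
rewrite /inside_arc !gpos_switch; case: eqP => // _.
by rewrite /= minnC maxnC.
Qed.

Lemma mixed_switch n (K : gauss_diagram n) l c d :
  mixed_crossing (switch K l) c d = mixed_crossing K c d.
Proof.
rewrite /mixed_crossing !inside_switch !gpos_switch.
by case: (d == l) => //=; congr (_ && _); rewrite eq_sym.
Qed.

Lemma Lbar_switch n (K : gauss_diagram n) l c :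
  gd_sign K l = 1 -> Lbar (switch K l) c = Lbar K c.
Proof.
move=> hl; rewrite /Lbar !odd_abs2; congr (~~ _).
rewrite /Lsm.
under eq_bigl do rewrite mixed_switch.
case: (boolP (mixed_crossing K c l)) => hm.
  rewrite (bigD1 l) //= [in RHS](bigD1 l) //= eqxx hl.
  have -> : \sum_(i | mixed_crossing K c i && (i != l))
      gd_sign (switch K l) i =
    \sum_(i | mixed_crossing K c i && (i != l)) gd_sign K i.
    by apply: eq_bigr => i /andP [_ /negbTE h]; rewrite /switch /= h.
  have -> : (-1 : int) + \sum_(i | mixed_crossing K c i && (i != l)) gd_sign K i
     = (1 + \sum_(i | mixed_crossing K c i && (i != l)) gd_sign K i) + (-2).
    by rewrite addrC [1 + _]addrC -addrA.
  by rewrite rpredDr // rpredN.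
congr (_ %| _)%Z; apply: eq_bigr => i hi; rewrite /switch /=; case: eqP => // e.
by rewrite -e hi in hm.
Qed.

Theorem mainTheorem5 (n : nat) (K : gauss_diagram n) (l : 'I_n) :
  wf_gauss K -> gd_sign K l = 1 ->
  forall i : nat, (2 %| (gamma K + gamma (switch K l))`_i)%Z.
Proof.
move=> _ hl i.
rewrite /gamma -big_split coef_sum /=.
apply: rpred_sum => c _.
rewrite Lbar_switch // -mulrDl -polyCD coefCM coefXn.
apply: dvdz_mulr.
rewrite /switch /=; case: eqP => [->|_]; first by rewrite subrr.
by apply/dvdzP; exists (gd_sign K c); rewrite mulrDr mulr1.
Qed.
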